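(* Let $a_1,a_2\ge0$ and $D=D_{a_1,a_2}$. (a) Let $S_1:D_1\to\mathbb{Z}_{\ge0}$. For any $h,h'\in D_1$, the local shadows $\operatorname{sh}(h;S_1)$ and $\operatorname{sh}(h';S_1)$ are either disjoint or one is contained in the other. (b) Let $S_2:D_2\to\mathbb{Z}_{\ge0}$. For any $v,v'\in D_2$, the local shadows $\operatorname{sh}(v;S_2)$ and $\operatorname{sh}(v';S_2)$ are either disjoint or one is contained in the other.
   Context: Maximal Dyck path: $D=D_{a_1,a_2}$ is the lattice path of unit East and North steps from $(0,0)$ to $(a_1,a_2)$ staying weakly below the diagonal of $[0,a_1]\times[0,a_2]$ and closest to it. $D_1$, $D_2$ are its sets of horizontal and vertical edges. Identify $(0,0)\equiv(a_1,a_2)$ so $D$ is a cyclic sequence of edges; for edges $e,e'$, $ee'$ is the subpath from $e$ to $e'$ inclusive following $D$ cyclically, $ee$ is $e$ alone, and $(ee')_1,(ee')_2$ are its horizontal and vertical edges. Local shadows: for $h\in D_1$, $\operatorname{sh}(h;S_1)=(he)_2$ where $he$ is the shortest subpath of $D$ starting at $h$ with $|(he)_2|=\sum_{h'\in(he)_1}S_1(h')$; if no such subpath exists, $\operatorname{sh}(h;S_1)=D_2$. For $v\in D_2$, $\operatorname{sh}(v;S_2)=(ev)_1$ where $ev$ is the shortest subpath of $D$ ending at $v$ with $|(ev)_1|=\sum_{v'\in(ev)_2}S_2(v')$; if no such subpath exists, $\operatorname{sh}(v;S_2)=D_1$. *)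

(* Defs.v *)
From mathcomp Require Import all_boot.

Set Implicit Arguments.
Unset Strict Implicit.
Unset Printing Implicit Defensive.

(* The maximal Dyck path D_{a1,a2}, encoded as its word of steps:
   true = East (horizontal) step, false = North (vertical) step.
   Lattice points (x,y) weakly below the diagonal satisfy a1*y <= a2*x; the
   highest such path takes, for x = 1..a1, one East step at height
   floor(a2(x-1)/a1) followed by North steps up to height floor(a2 x/a1). *)
Definition dyck_word (a1 a2 : nat) : seq bool :=
  if a1 == 0 then nseq a2 false
  else flatten [seq true :: nseq (a2 * x %/ a1 - a2 * x.-1 %/ a1) false
               | x <- iota 1 a1].

(* Edges of D are indexed by their position 'I_(a1+a2) along the path. *)
Definition is_hor {a1 a2 : nat} (e : 'I_(a1 + a2)) : bool :=
  nth false (dyck_word a1 a2) e.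

Definition D1 (a1 a2 : nat) : {set 'I_(a1 + a2)} := [set e | is_hor e].
Definition D2 (a1 a2 : nat) : {set 'I_(a1 + a2)} := [set e | ~~ is_hor e].

(* The cyclic subpath ee' (from e to e' inclusive, following D cyclically). *)
Definition subpath {a1 a2 : nat} (e e' : 'I_(a1 + a2)) : {set 'I_(a1 + a2)} :=
  [set i : 'I_(a1 + a2) | (i + (a1 + a2) - e) %% (a1 + a2)
                          <= (e' + (a1 + a2) - e) %% (a1 + a2)].

Definition hcond {a1 a2 : nat} (S1 : 'I_(a1 + a2) -> nat) (h e : 'I_(a1 + a2)) : bool :=
  #|subpath h e :&: D2 a1 a2| == \sum_(i in subpath h e :&: D1 a1 a2) S1 i.

Definition sh1 {a1 a2 : nat} (S1 : 'I_(a1 + a2) -> nat) (h : 'I_(a1 + a2))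
  : {set 'I_(a1 + a2)} :=
  if [pick e | hcond S1 h e] is Some e0 then
    subpath h [arg min_(e < e0 | hcond S1 h e) #|subpath h e|] :&: D2 a1 a2
  else D2 a1 a2.

Definition vcond {a1 a2 : nat} (S2 : 'I_(a1 + a2) -> nat) (v e : 'I_(a1 + a2)) : bool :=
  #|subpath e v :&: D1 a1 a2| == \sum_(i in subpath e v :&: D2 a1 a2) S2 i.

Definition sh2 {a1 a2 : nat} (S2 : 'I_(a1 + a2) -> nat) (v : 'I_(a1 + a2))
  : {set 'I_(a1 + a2)} :=
  if [pick e | vcond S2 v e] is Some e0 then
    subpath [arg min_(e < e0 | vcond S2 v e) #|subpath e v|] v :&: D1 a1 a2
  else D1 a1 a2.

(* Main.v *)
Require Import Defs.
From mathcomp Require Import all_boot.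
From mathcomp Require Import zify.

Set Implicit Arguments.
Unset Strict Implicit.
Unset Printing Implicit Defensive.

Lemma modcase n a b : a < n -> b < n ->
  (a + n - b) %% n = if b <= a then a - b else a + n - b.
Proof.
move=> ha hb; case: leqP => h.
  by rewrite -addnBAC // modnDr modn_small //; lia.
by rewrite modn_small //; lia.
Qed.

Record dgood n (d : 'I_n -> 'I_n -> nat) : Prop := DGood {
  dlt : forall x i, d x i < n;
  dinj : forall x i j, d x i = d x j -> i = j;
  dsurj : forall x k, k < n -> exists i, d x i = k;
  d0 : forall x, d x x = 0;
  dsplit1 : forall x y i, 0 < d x y -> d x y <= d x i -> d y i = d x i - d x y;
  dsplit2 : forall x y i, d x i < d x y -> d y i = d x i + n - d x y }.

Lemma dgoodF n (F : 'I_n -> nat) :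
  (forall i, F i < n) -> (forall i j, F i = F j -> i = j) ->
  (forall k, k < n -> exists i, F i = k) ->
  dgood (fun x i => (F i + n - F x) %% n).
Proof.
move=> Fb Finj Fs; split.
- move=> x i; rewrite modcase ?Fb //; have := Fb i; have := Fb x.
  case: (leqP (F x) (F i)) => /= *; lia.
- move=> x i j; rewrite !modcase ?Fb //; have := Fb i; have := Fb x; have := Fb j.
  case: (leqP (F x) (F i)); case: (leqP (F x) (F j)) => /= *; apply: Finj; lia.
- move=> x k hk; have := Fb x => hx.
  case: (ltnP (F x + k) n) => h.
    have [i hi] := Fs _ h; exists i; rewrite modcase ?Fb //.
    case: (leqP (F x) (F i)) => /= *; lia.
  have [i hi] := Fs (F x + k - n) ltac:(lia); exists i; rewrite modcase ?Fb //.
  case: (leqP (F x) (F i)) => /= *; lia.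
- by move=> x; rewrite modcase ?Fb // leqnn subnn.
- move=> x y i; rewrite !modcase ?Fb //; have := Fb i; have := Fb x; have := Fb y.
  case: (leqP (F x) (F i)); case: (leqP (F x) (F y)); case: (leqP (F y) (F i)) => /= *; lia.
- move=> x y i; rewrite !modcase ?Fb //; have := Fb i; have := Fb x; have := Fb y.
  case: (leqP (F x) (F i)); case: (leqP (F x) (F y)); case: (leqP (F y) (F i)) => /= *; lia.
Qed.

Definition cnd n (X Y : {set 'I_n}) (S : 'I_n -> nat) (A : {set 'I_n}) : bool :=
  #|A :&: X| == \sum_(i in A :&: Y) S i.

Definition shg n (arc : 'I_n -> 'I_n -> {set 'I_n}) (X Y : {set 'I_n})
  (S : 'I_n -> nat) (x : 'I_n) : {set 'I_n} :=
  if [pick e | cnd X Y S (arc x e)] is Some e0 then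
    arc x [arg min_(e < e0 | cnd X Y S (arc x e)) #|arc x e|] :&: X
  else X.

Definition Ar n (d : 'I_n -> 'I_n -> nat) x k : {set 'I_n} := [set i | d x i <= k].

Lemma sum_sub n (A B : {set 'I_n}) (F : 'I_n -> nat) :
  A \subset B -> \sum_(i in A) F i <= \sum_(i in B) F i.
Proof.
move=> AB; rewrite [X in _ <= X](big_setID A) /=.
by rewrite (setIidPr AB) leq_addr.
Qed.

Lemma disjP n (A B : {set 'I_n}) :
  (forall i, i \in A -> i \in B -> False) -> [disjoint A & B].
Proof.
move=> H; rewrite disjoints_subset; apply/subsetP => i hi; rewrite inE.
by apply/negP => hb; exact: H hi hb.
Qed.

Lemma union_add n (A B X Y : {set 'I_n}) (S : 'I_n -> nat) :
  [disjoint A & B] ->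
  #|(A :|: B) :&: X| = #|A :&: X| + #|B :&: X| /\
  \sum_(i in (A :|: B) :&: Y) S i = \sum_(i in A :&: Y) S i + \sum_(i in B :&: Y) S i.
Proof.
move=> dAB.
have dI : forall Z, [disjoint A :&: Z & B :&: Z].
  move=> Z; apply/disjP => i; rewrite !inE => /andP[h1 _] /andP[h2 _].
  by rewrite (disjointFr dAB h1) in h2.
split.
  rewrite setIUl cardsU (disjoint_setI0 (dI X)) cards0 subn0 //.
rewrite setIUl -bigU ?dI //; apply: eq_bigl => i; by rewrite !inE.
Qed.

Lemma A0 n d (Dg : @dgood n d) x : Ar d x 0 = [set x].
Proof.
apply/setP => i; rewrite !inE leqn0; apply/eqP/eqP => [H|->]; last by rewrite d0.
by apply: (dinj Dg (x := x)); rewrite H d0.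
Qed.

Lemma Amono n d x k k' : k <= k' -> @Ar n d x k \subset Ar d x k'.
Proof. by move=> kk; apply/subsetP => i; rewrite !inE => h; apply: leq_trans kk. Qed.

Lemma lt_before n d (Dg : @dgood n d) (X Y : {set 'I_n}) S x :
  (forall i, i \in Y -> i \notin X) -> x \in Y ->
  forall K, K < n -> (forall k, k <= K -> ~~ cnd X Y S (Ar d x k)) ->
  #|Ar d x K :&: X| < \sum_(i in Ar d x K :&: Y) S i.
Proof.
move=> hXY hx; elim=> [|K IH] hK hc.
  have := hc 0 (leqnn 0); rewrite /cnd (A0 Dg).
  have -> : [set x] :&: X = set0.
    apply/setP => i; rewrite !inE; case: eqP => // ->; by rewrite (negbTE (hXY _ hx)).
  by rewrite cards0 lt0n eq_sym.
have IH' := IH (ltnW hK) (fun k hk => hc k (leqW hk)).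
have [i0 hi0] := dsurj Dg x hK.
have sub : Ar d x K.+1 \subset i0 |: Ar d x K.
  apply/subsetP => i; rewrite !inE => hi; case: (ltnP (d x i) K.+1) => h.
    by rewrite orbC -ltnS h.
  by apply/orP; left; apply/eqP; apply: (dinj Dg (x := x)); rewrite hi0; apply/eqP; rewrite eqn_leq hi h.
have c1 : #|Ar d x K.+1 :&: X| <= #|Ar d x K :&: X|.+1.
  apply: (leq_trans (subset_leq_card (setSI X sub))).
  rewrite setIUl; apply: (leq_trans (leq_card_setU _ _)).
  by rewrite addnC -addn1 leq_add2l (leq_trans (subset_leq_card (subsetIl _ _))) // cards1.
have s1 : \sum_(i in Ar d x K :&: Y) S i <= \sum_(i in Ar d x K.+1 :&: Y) S i.
  by apply: sum_sub; apply: setSI; apply: Amono.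
have := hc K.+1 (leqnn _); rewrite /cnd => hne.
rewrite ltn_neqAle hne /=.
by apply: (leq_trans c1); apply: leq_trans s1.
Qed.

Lemma shg_spec n d (arc : 'I_n -> 'I_n -> {set 'I_n}) X Y S x :
  (forall x e, arc x e = Ar d x (d x e)) ->
  shg arc X Y S x = X \/
  exists e, [/\ shg arc X Y S x = Ar d x (d x e) :&: X, cnd X Y S (Ar d x (d x e)) &
    forall e', cnd X Y S (Ar d x (d x e')) -> d x e <= d x e'].
Proof.
move=> harc; rewrite /shg; case: pickP => [e0 He0|_]; last by left.
right; case: arg_minnP => // e He Hmin; exists e; split; rewrite -?harc //.
move=> e' He'; rewrite leqNgt; apply/negP => lt.
have := Hmin e'; rewrite !harc => /(_ He'); apply/negP; rewrite -ltnNge.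
apply: proper_card; apply/properP; split; first by apply: Amono; apply: ltnW.
by exists e; rewrite !inE // -ltnNge.
Qed.

Lemma split_arc n d (Dg : @dgood n d) x x' m :
  0 < d x x' -> d x x' <= m -> m < n ->
  Ar d x m = Ar d x (d x x').-1 :|: Ar d x' (m - d x x') /\
  [disjoint Ar d x (d x x').-1 & Ar d x' (m - d x x')].
Proof.
move=> p0 pm mn; split.
  apply/setP => i; rewrite !inE; case: (ltnP (d x i) (d x x')) => h.
    have E := dsplit2 Dg h.
    have H1 : d x i <= m by lia.
    have H2 : d x i <= (d x x').-1 by lia.
    by rewrite H1 H2.
  have E := dsplit1 Dg p0 h.
  have H2 : (d x i <= (d x x').-1) = false by apply/negbTE; rewrite -ltnNge; lia.
  rewrite H2 E /=; apply/idP/idP => ?; lia.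
apply/disjP => i; rewrite !inE => h1 h2.
have h : d x i < d x x' by lia.
have E := dsplit2 Dg h; have := dlt Dg x i; lia.
Qed.

Lemma inside n d (Dg : @dgood n d) (X Y : {set 'I_n}) S x x' e e' :
  (forall i, i \in Y -> i \notin X) -> x \in Y -> x' \in Y ->
  cnd X Y S (Ar d x (d x e)) ->
  (forall e'', cnd X Y S (Ar d x (d x e'')) -> d x e <= d x e'') ->
  cnd X Y S (Ar d x' (d x' e')) ->
  (forall e'', cnd X Y S (Ar d x' (d x' e'')) -> d x' e' <= d x' e'') ->
  d x x' <= d x e ->
  Ar d x' (d x' e') \subset Ar d x (d x e).
Proof.
move=> hXY hx hx' He Hm He' Hm' hin.
set m := d x e.
have mn : m < n := dlt Dg x e.
case: (posnP (d x x')) => p0.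
  have xx : x' = x by apply: (dinj Dg (x := x)); rewrite p0 d0.
  subst x'; apply: Amono; exact: Hm' e He.
set p := d x x' in p0 hin *.
have [j [jle hj]] : exists j, j <= m - p /\ cnd X Y S (Ar d x' j).
  case: (boolP [exists j : 'I_(m - p).+1, cnd X Y S (Ar d x' j)]).
    by move/existsP => [j hj]; exists j; split => //; rewrite -ltnS.
  move/existsPn => hno; exfalso.
  have l1 : #|Ar d x' (m - p) :&: X| < \sum_(i in Ar d x' (m - p) :&: Y) S i.
    apply: lt_before => //; first lia.
    by move=> k hk; have := hno (Ordinal (hk : k < (m - p).+1)).
  have l2 : #|Ar d x p.-1 :&: X| < \sum_(i in Ar d x p.-1 :&: Y) S i.
    apply: lt_before => //; first lia.
    move=> k hk; apply/negP => hc.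
    have [e'' he''] := dsurj Dg x (k := k) ltac:(lia).
    have := Hm e''; rewrite he'' => /(_ hc); lia.
  have [E D] := split_arc Dg p0 hin mn.
  have [U1 U2] := union_add X Y S D.
  move: He l1 l2; rewrite /cnd /m /p E U1 U2 => /eqP; lia.
have [e'' he''] := dsurj Dg x' (k := j) ltac:(lia).
have le : d x' e' <= j by rewrite -he''; apply: Hm'; rewrite he''.
apply/subsetP => i; rewrite !inE => hi.
case: (ltnP (d x i) p) => h; first lia.
have := dsplit1 Dg p0 h; lia.
Qed.

Lemma lam n d (Dg : @dgood n d) (arc : 'I_n -> 'I_n -> {set 'I_n}) (X Y : {set 'I_n}) S x x' :
  (forall x e, arc x e = Ar d x (d x e)) ->
  (forall i, i \in Y -> i \notin X) -> x \in Y -> x' \in Y ->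
  [disjoint shg arc X Y S x & shg arc X Y S x'] \/
  shg arc X Y S x \subset shg arc X Y S x' \/ shg arc X Y S x' \subset shg arc X Y S x.
Proof.
move=> harc hXY hx hx'.
have sub : forall z, shg arc X Y S z \subset X.
  by move=> z; case: (shg_spec X Y S z harc) => [->|[e [-> _ _]]]; rewrite ?subsetIr.
case: (shg_spec X Y S x harc) => [Ex|[e [Ex He Hm]]].
  by right; right; rewrite Ex sub.
case: (shg_spec X Y S x' harc) => [Ex'|[e' [Ex' He' Hm']]].
  by right; left; rewrite Ex' sub.
rewrite Ex Ex'.
case: (leqP (d x x') (d x e)) => h1.
  by right; right; apply: setSI; apply: (inside Dg hXY hx hx' He Hm He' Hm' h1).
case: (leqP (d x' x) (d x' e')) => h2.
  by right; left; apply: setSI; apply: (inside Dg hXY hx' hx He' Hm' He Hm h2).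
left; apply/disjP => i; rewrite !inE => /andP[i1 _] /andP[i2 _].
have hi : d x i < d x x' by lia.
have E1 := dsplit2 Dg hi.
have hxx : d x x < d x x' by rewrite d0 //; lia.
have E2 := dsplit2 Dg hxx.
have := dlt Dg x x'; rewrite d0 // in E2; lia.
Qed.

Theorem lemma4p10 (a1 a2 : nat) :
  (forall (S1 : 'I_(a1 + a2) -> nat) (h h' : 'I_(a1 + a2)),
      h \in D1 a1 a2 -> h' \in D1 a1 a2 ->
      [disjoint sh1 S1 h & sh1 S1 h'] \/
      sh1 S1 h \subset sh1 S1 h' \/ sh1 S1 h' \subset sh1 S1 h) /\
  (forall (S2 : 'I_(a1 + a2) -> nat) (v v' : 'I_(a1 + a2)),
      v \in D2 a1 a2 -> v' \in D2 a1 a2 ->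
      [disjoint sh2 S2 v & sh2 S2 v'] \/
      sh2 S2 v \subset sh2 S2 v' \/ sh2 S2 v' \subset sh2 S2 v).
Proof.
have hD1 : forall i, i \in D1 a1 a2 -> i \notin D2 a1 a2.
  by move=> i; rewrite !inE => ->.
have hD2 : forall i, i \in D2 a1 a2 -> i \notin D1 a1 a2.
  by move=> i; rewrite !inE => /negbTE ->.
split.
  move=> S h h' hh hh'.
  have Dg : dgood (fun x i : 'I_(a1 + a2) => ((nat_of_ord i) + (a1 + a2) - (nat_of_ord x)) %% (a1 + a2)).
    apply: dgoodF => //; first exact: val_inj.
    by move=> k hk; exists (Ordinal hk).
  exact (@lam (a1 + a2) _ Dg (fun h e => subpath h e) (D2 a1 a2) (D1 a1 a2) S h h' (fun _ _ => erefl) hD1 hh hh').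
move=> S v v' hv hv'.
have Dg : dgood (fun x i : 'I_(a1 + a2) => (((a1 + a2) - (nat_of_ord i).+1) + (a1 + a2) - ((a1 + a2) - (nat_of_ord x).+1)) %% (a1 + a2)).
  apply: dgoodF => //.
  - by move=> i; have := ltn_ord i; lia.
  - by move=> i j hij; apply: val_inj; have := ltn_ord i; have := ltn_ord j; rewrite /= in hij *; lia.
  - move=> k hk; have hk' : (a1 + a2) - k.+1 < (a1 + a2) by lia.
    by exists (Ordinal hk'); rewrite /=; lia.
apply: (lam Dg (arc := fun v e => subpath e v) (X := D1 a1 a2) (Y := D2 a1 a2) S _ hD2 hv hv').
move=> x e; apply/setP => i; rewrite !inE.
have hi := ltn_ord i; have hx := ltn_ord x; have he := ltn_ord e.
rewrite !modcase; try lia.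
case: (leqP (nat_of_ord e) (nat_of_ord i)); case: (leqP (nat_of_ord e) (nat_of_ord x));
case: (leqP (a1 + a2 - x.+1) (a1 + a2 - i.+1)); case: (leqP (a1 + a2 - x.+1) (a1 + a2 - e.+1)) => /= *;
apply/idP/idP => ?; lia.
Qed.
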